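(* Let $n,k,t$ be positive integers with $k<n$ and $q$ a prime power. Let $\Omega$ be an $(nt-kt-2)$-dimensional subspace of $\mathrm{PG}(nt-1,q)$, let $\Gamma$ be a plane skew from $\Omega$, and let $\bar{B}$ be a minimal blocking set (with respect to lines) of $\Gamma$ such that every point of $\bar{B}$ lies on at least $t$ tangent lines to $\bar{B}$ in $\Gamma$. Let $\Pi=\langle\Omega,\Gamma\rangle$ and let $K$ be the cone in $\Pi$ with vertex $\Omega$ and base $\bar{B}$. Then for every point $P$ of $K$ there exist a subspace $\mu$ of $\Pi$ of codimension $2$ in $\Pi$ and at least $t$ hyperplanes of $\Pi$ through $P$, each of which meets $K$ only in points of $\mu$.
   Context: The cone with vertex a subspace $\Omega$ and base a point set $\bar{B}$ contained in a subspace skew from $\Omega$ is $\bigcup_{P\in\bar B}\langle P,\Omega\rangle$. A blocking set of a plane is a point set meeting every line; it is minimal if no proper subset is a blocking set. A tangent line to $\bar B$ is a line meeting $\bar B$ in exactly one point. *)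

(* Defs.v *)
(* Projective space PG(N-1,q) modelled as the lattice of
   subspaces of F^N (row vectors), F a finite field of order q.
   A projective subspace is represented by its canonical square matrix
   (U with <<U>> = U), so that distinct subspaces are distinct matrices;
   projective dimension d  <->  \rank U = d+1. *)
From HB Require Import structures.
From mathcomp Require Import all_boot all_order all_algebra.
Set Implicit Arguments. Unset Strict Implicit. Unset Printing Implicit Defensive.
Import GRing.Theory.
Local Open Scope ring_scope.

Section PG.
Variables (F : finFieldType) (N : nat).
Local Notation sub := 'M[F]_N.

Definition is_subsp (U : sub) : bool := (<<U>>%MS == U).
Definition is_point (U : sub) : bool := is_subsp U && (\rank U == 1)%N.
Definition is_line_in (G L : sub) : bool :=
  [&& is_subsp L, \rank L == 2 & (L <= G)%MS]%N.
Definition is_hyperplane_of (Pi H : sub) : bool :=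
  [&& is_subsp H, (\rank H == (\rank Pi).-1)%N & (H <= Pi)%MS].

Definition pts_on (B : {set sub}) (L : sub) : {set sub} :=
  [set P in B | (P <= L)%MS].

Definition blocking_set (G : sub) (B : {set sub}) : Prop :=
  (forall P, P \in B -> is_point P && (P <= G)%MS) /\
  (forall L, is_line_in G L -> pts_on B L != set0).

Definition minimal_blocking_set (G : sub) (B : {set sub}) : Prop :=
  blocking_set G B /\ (forall B' : {set sub}, B' \proper B -> ~ blocking_set G B').

Definition tangents_at (G : sub) (B : {set sub}) (P : sub) : {set sub} :=
  [set L | is_line_in G L && (P <= L)%MS && (#|pts_on B L| == 1)%N].

Definition cone (Om : sub) (B : {set sub}) : {set sub} :=
  [set X | is_point X && [exists Q in B, (X <= Q + Om)%MS]].
End PG.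

(* Main.v *)
Require Import Defs.
From HB Require Import structures.
From mathcomp Require Import all_boot all_order all_algebra.
Local Open Scope ring_scope.

Lemma rk_sum (F : finFieldType) N (Om Ga A : 'M[F]_N) :
  \rank (Om :&: Ga)%MS = 0%N -> (A <= Ga)%MS ->
  \rank (A + Om)%MS = (\rank A + \rank Om)%N.
Proof.
move=> h0 AG; have := mxrank_sum_cap A Om.
suff -> : \rank (A :&: Om)%MS = 0%N by rewrite addn0.
apply/eqP; rewrite -leqn0 -h0; apply: mxrankS.
rewrite sub_capmx capmxSr /=; exact: submx_trans (capmxSl _ _) AG.
Qed.

Arguments rk_sum {F N Om Ga A}.

Lemma sub_of_gen (F : finFieldType) N (Om Ga L1 L2 : 'M[F]_N) :
  \rank (Om :&: Ga)%MS = 0%N -> (L1 <= Ga)%MS -> (L2 <= Ga)%MS ->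
  (L1 <= L2 + Om)%MS -> (L1 <= L2)%MS.
Proof.
move=> h0 L1G L2G h.
have Z : (Om :&: Ga)%MS = 0 by apply/eqP; rewrite -mxrank_eq0 h0.
have : (L1 <= (L2 + Om) :&: Ga)%MS by rewrite sub_capmx h L1G.
by rewrite -(matrix_modl Om L2G) Z addsmx0.
Qed.

Arguments sub_of_gen {F N Om Ga L1 L2}.

Lemma key (F : finFieldType) N (Om Ga Q' L X : 'M[F]_N) :
  \rank (Om :&: Ga)%MS = 0%N -> (Q' <= Ga)%MS -> (L <= Ga)%MS ->
  \rank Q' = 1%N -> \rank L = 2%N -> ~~ (Q' <= L)%MS ->
  (X <= Q' + Om)%MS -> (X <= L + Om)%MS -> (X <= Om)%MS.
Proof.
move=> h0 QG LG rQ rL nQL XQ XL.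
have c0 : \rank (Q' :&: L)%MS = 0%N.
  have [le E] := mxrank_leqif_sup (capmxSl Q' L).
  have : \rank (Q' :&: L)%MS != \rank Q'.
    by rewrite E; apply: contra nQL => h; rewrite (submx_trans h) ?capmxSr.
  by move: le; rewrite rQ; case: (\rank _) => [|[|]].
have r3 : \rank (Q' + L)%MS = 3%N.
  by have := mxrank_sum_cap Q' L; rewrite c0 rQ rL addn0.
set S := ((Q' + Om) :&: (L + Om))%MS.
have OS : (Om <= S)%MS by rewrite sub_capmx !addsmxSr.
have r4 : (3 + \rank Om <= \rank ((Q' + Om) + (L + Om)))%N.
  rewrite -r3 -(rk_sum h0) ?addsmx_sub ?QG ?LG //; apply: mxrankS.
  have h1 : (Q' + Om <= (Q' + Om) + (L + Om))%MS := addsmxSl _ _.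
  have h2 : (L + Om <= (Q' + Om) + (L + Om))%MS := addsmxSr _ _.
  by rewrite !addsmx_sub (submx_trans (addsmxSl Q' Om) h1)
    (submx_trans (addsmxSl L Om) h2) (submx_trans (addsmxSr Q' Om) h1).
have rS : (\rank S <= \rank Om)%N.
  have := mxrank_sum_cap (Q' + Om)%MS (L + Om)%MS.
  rewrite (rk_sum h0 QG) (rk_sum h0 LG) rQ rL => E.
  rewrite -(leq_add2l (\rank ((Q' + Om) + (L + Om)))) -/S E.
  apply: leq_trans (leq_add r4 (leqnn (\rank Om))) => //.
  by rewrite addnACA.
have [_ E] := mxrank_leqif_sup OS.
have SO : (S <= Om)%MS.
  by rewrite -E eqn_leq rS mxrankS.
by apply: submx_trans SO; rewrite sub_capmx XQ XL.
Qed.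

Arguments key {F N Om Ga Q' L X}.

Theorem lemma4p3 (F : finFieldType) (n k t : nat)
  (hn : (0 < n)%N) (hk : (0 < k)%N) (ht : (0 < t)%N) (hkn : (k < n)%N)
  (Om Ga : 'M[F]_(n * t)) (B : {set 'M[F]_(n * t)})
  (hOm : is_subsp Om) (hOmdim : \rank Om = (n * t - k * t - 1)%N)
  (hGa : is_subsp Ga) (hGadim : \rank Ga = 3%N)
  (hskew : \rank (Om :&: Ga)%MS = 0%N)
  (hB : minimal_blocking_set Ga B)
  (htan : forall P, P \in B -> (t <= #|tangents_at Ga B P|)%N) :
  let Pi := (Om + Ga)%MS in
  let K := cone Om B in
  forall P, P \in K ->
    exists mu : 'M[F]_(n * t),
      [/\ is_subsp mu, (mu <= Pi)%MS, \rank mu = (\rank Pi - 2)%N &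
      exists Hs : {set 'M[F]_(n * t)},
        [/\ (t <= #|Hs|)%N &
          forall H, H \in Hs ->
            [/\ is_hyperplane_of Pi H, (P <= H)%MS &
                forall X, X \in K -> (X <= H)%MS -> (X <= mu)%MS]]].
Proof.
move=> Pi K P; rewrite inE => /andP [Ppt /existsP [Q /andP [QB PQ]]].
case: hB => [[hB1 hB2] _].
have /andP [/andP [_ /eqP rQ] QG] := hB1 Q QB.
have rPi : \rank Pi = (\rank Om + 3)%N.
  by have := mxrank_sum_cap Om Ga; rewrite hskew hGadim addn0.
exists <<(Q + Om)%MS>>%MS; split.
- by rewrite /is_subsp genmx_id.
- by rewrite genmxE addsmx_sub addsmxSl (submx_trans QG) ?addsmxSr.
- by rewrite genmxE (rk_sum hskew QG) rPi rQ addnC -addnBA.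
exists [set <<(L + Om)%MS>>%MS | L in tangents_at Ga B Q]; split.
- rewrite card_in_imset; first exact: htan.
  move=> L1 L2; rewrite !inE => /andP [/andP [/and3P [s1 _ L1G] _] _].
  move=> /andP [/andP [/and3P [s2 _ L2G] _] _] E.
  have l12 : (L1 <= L2)%MS.
    apply: (sub_of_gen hskew) => //.
    have : (L1 <= <<(L1 + Om)%MS>>)%MS by rewrite genmxE addsmxSl.
    by rewrite E genmxE.
  have l21 : (L2 <= L1)%MS.
    apply: (sub_of_gen hskew) => //.
    have : (L2 <= <<(L2 + Om)%MS>>)%MS by rewrite genmxE addsmxSl.
    by rewrite -E genmxE.
  rewrite -(eqP s1) -(eqP s2); apply: eq_genmx; apply/eqmxP.
  by rewrite l12 l21.
move=> H /imsetP [L]; rewrite inE => /andP [/andP [/and3P [sL /eqP rL LG] QL] c1] ->.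
split.
- apply/and3P; split.
  + by rewrite /is_subsp genmx_id.
  + by rewrite genmxE (rk_sum hskew LG) rPi rL [(2 + _)%N]addnC !addnS.
  + by rewrite genmxE addsmx_sub addsmxSl (submx_trans LG) ?addsmxSr.
- by rewrite genmxE (submx_trans PQ) // addsmxS.
move=> X; rewrite inE => /andP [Xpt /existsP [Q' /andP [Q'B XQ']]] XH.
rewrite genmxE in XH; rewrite genmxE.
have /andP [/andP [_ /eqP rQ'] Q'G] := hB1 Q' Q'B.
case: (boolP (Q' <= L)%MS) => Q'L.
- have [x Ex] := cards1P c1.
  have : Q \in pts_on B L by rewrite inE QB QL.
  have : Q' \in pts_on B L by rewrite inE Q'B Q'L.
  rewrite Ex !inE => /eqP e1 /eqP e2.
  have eQ : Q = Q' by rewrite e1 e2.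
  by rewrite eQ.
- apply: submx_trans (addsmxSr _ _).
  exact: (key hskew Q'G LG rQ' rL Q'L XQ' XH).
Qed.
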